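(* Let $U$ be any consistent theory (of arbitrary complexity of its axiom set) in the language of arithmetic that extends Robinson's theory $\mathsf{R}$ (the Tarski–Mostowski–Robinson theory). Then there is no formula $\rho(x)$ satisfying both of the following: (Independence) for every sentence $\phi$, if $U+\phi$ is consistent, then both $U+\phi+\rho(\ulcorner\phi\urcorner)$ and $U+\phi+\neg\rho(\ulcorner\phi\urcorner)$ are consistent; (Extensionality) for all sentences $\phi,\psi$, if $U\vdash\phi\leftrightarrow\psi$, then $U\vdash\rho(\ulcorner\phi\urcorner)\leftrightarrow\rho(\ulcorner\psi\urcorner)$.
   Context: $\ulcorner\phi\urcorner$ denotes the numeral of the Gödel number of $\phi$. *)

(* Defs.v *)
From Stdlib Require Import Arith List.

Inductive term : Type :=
| tvar  : nat -> term
| tzero : term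
| tsucc : term -> term
| tplus : term -> term -> term
| tmult : term -> term -> term.

Inductive form : Type :=
| fbot : form
| feq  : term -> term -> form
| fimp : form -> form -> form
| fall : form -> form.

Definition scons {A} (a : A) (s : nat -> A) (n : nat) : A :=
  match n with 0 => a | S k => s k end.

Fixpoint tsubst (s : nat -> term) (t : term) : term :=
  match t with
  | tvar n => s n
  | tzero => tzero
  | tsucc u => tsucc (tsubst s u)
  | tplus u v => tplus (tsubst s u) (tsubst s v)
  | tmult u v => tmult (tsubst s u) (tsubst s v)
  end.

Definition tshift (t : term) : term := tsubst (fun n => tvar (S n)) t.

Definition up (s : nat -> term) : nat -> term :=
  scons (tvar 0) (fun n => tshift (s n)).

Fixpoint fsubst (s : nat -> term) (p : form) : form :=
  match p with
  | fbot => fbot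
  | feq u v => feq (tsubst s u) (tsubst s v)
  | fimp a b => fimp (fsubst s a) (fsubst s b)
  | fall a => fall (fsubst (up s) a)
  end.

Definition fshift (p : form) : form := fsubst (fun n => tvar (S n)) p.

Definition inst (t : term) (p : form) : form := fsubst (scons t tvar) p.

Definition fneg (p : form) : form := fimp p fbot.
Definition for_ (p q : form) : form := fimp (fneg p) q.
Definition fand (p q : form) : form := fneg (fimp p (fneg q)).
Definition fex (p : form) : form := fneg (fall (fneg p)).
Definition fiff (p q : form) : form := fand (fimp p q) (fimp q p).

Definition fle (t s : term) : form :=
  fex (feq (tplus (tvar 0) (tshift t)) (tshift s)).

Fixpoint tbound (k : nat) (t : term) : Prop :=
  match t with
  | tvar n => n < k
  | tzero => True
  | tsucc u => tbound k u
  | tplus u v | tmult u v => tbound k u /\ tbound k v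
  end.

Fixpoint fbound (k : nat) (p : form) : Prop :=
  match p with
  | fbot => True
  | feq u v => tbound k u /\ tbound k v
  | fimp a b => fbound k a /\ fbound k b
  | fall a => fbound (S k) a
  end.

Definition sentence (p : form) : Prop := fbound 0 p.

Definition theory := form -> Prop.

Definition shift_theory (T : theory) : theory :=
  fun p => exists q, T q /\ p = fshift q.

Definition extend (T : theory) (p : form) : theory :=
  fun q => T q \/ q = p.

Inductive Prov : theory -> form -> Prop :=
| P_hyp  : forall T p, T p -> Prov T p
| P_K    : forall T p q, Prov T (fimp p (fimp q p))
| P_S    : forall T p q r,
    Prov T (fimp (fimp p (fimp q r)) (fimp (fimp p q) (fimp p r)))
| P_DNE  : forall T p, Prov T (fimp (fneg (fneg p)) p)
| P_inst : forall T p t, Prov T (fimp (fall p) (inst t p))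
| P_allimp : forall T p q,
    Prov T (fimp (fall (fimp (fshift p) q)) (fimp p (fall q)))
| P_refl : forall T t, Prov T (feq t t)
| P_leib : forall T t s p, Prov T (fimp (feq t s) (fimp (inst t p) (inst s p)))
| P_mp   : forall T p q, Prov T (fimp p q) -> Prov T p -> Prov T q
| P_gen  : forall T p, Prov (shift_theory T) p -> Prov T (fall p).

Definition Consistent (T : theory) : Prop := ~ Prov T fbot.

Fixpoint num (n : nat) : term :=
  match n with 0 => tzero | S k => tsucc (num k) end.

Fixpoint bigor_eq (n : nat) : form :=
  match n with
  | 0 => feq (tvar 0) (num 0)
  | S k => for_ (bigor_eq k) (feq (tvar 0) (num (S k)))
  end.

Definition R_axiom (p : form) : Prop :=
  (exists n m, p = feq (tplus (num n) (num m)) (num (n + m))) \/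
  (exists n m, p = feq (tmult (num n) (num m)) (num (n * m))) \/
  (exists n m, n <> m /\ p = fneg (feq (num n) (num m))) \/
  (exists n, p = fall (fimp (fle (tvar 0) (num n)) (bigor_eq n))) \/
  (exists n, p = fall (for_ (fle (tvar 0) (num n)) (fle (num n) (tvar 0)))).

Definition pair (a b : nat) : nat := (a + b) * (a + b + 1) / 2 + b.

Fixpoint code_term (t : term) : nat :=
  match t with
  | tvar n => pair 0 n
  | tzero => pair 1 0
  | tsucc u => pair 2 (code_term u)
  | tplus u v => pair 3 (pair (code_term u) (code_term v))
  | tmult u v => pair 4 (pair (code_term u) (code_term v))
  end.

Fixpoint code (p : form) : nat :=
  match p with
  | fbot => pair 0 0
  | feq u v => pair 1 (pair (code_term u) (code_term v))
  | fimp a b => pair 2 (pair (code a) (code b))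
  | fall a => pair 3 (code a)
  end.

Definition apply_gn (rho phi : form) : form := inst (num (code phi)) rho.

(* Main.v *)
Require Import Defs.
From Stdlib Require Import Arith List Lia Bool Classical.
Import ListNotations.

Lemma tsubst_ext s1 s2 t : (forall n, s1 n = s2 n) -> tsubst s1 t = tsubst s2 t.
Proof. intro H; induction t; simpl; f_equal; auto. Qed.

Lemma up_ext s1 s2 : (forall n, s1 n = s2 n) -> forall n, up s1 n = up s2 n.
Proof. intros H [|n]; unfold up, scons; simpl; [reflexivity|now rewrite H]. Qed.

Lemma fsubst_ext p : forall s1 s2, (forall n, s1 n = s2 n) -> fsubst s1 p = fsubst s2 p.
Proof.
  induction p; intros s1 s2 H; simpl; f_equal; auto using tsubst_ext.
  apply IHp. apply up_ext, H.
Qed.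

Lemma tsubst_comp s1 s2 t : tsubst s1 (tsubst s2 t) = tsubst (fun n => tsubst s1 (s2 n)) t.
Proof. induction t; simpl; f_equal; auto. Qed.

Lemma up_comp s1 s2 n : tsubst (up s1) (up s2 n) = up (fun k => tsubst s1 (s2 k)) n.
Proof.
  destruct n; unfold up, scons; simpl; [reflexivity|].
  unfold tshift. rewrite !tsubst_comp. apply tsubst_ext. intro k. reflexivity.
Qed.

Lemma fsubst_comp p : forall s1 s2, fsubst s1 (fsubst s2 p) = fsubst (fun n => tsubst s1 (s2 n)) p.
Proof.
  induction p; intros s1 s2; simpl; f_equal; auto using tsubst_comp.
  rewrite IHp. apply fsubst_ext. intro n. apply up_comp.
Qed.

Lemma tsubst_id t : tsubst tvar t = t.
Proof. induction t; simpl; f_equal; auto. Qed.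

Lemma fsubst_id p : forall s, (forall n, s n = tvar n) -> fsubst s p = p.
Proof.
  induction p; intros s H; simpl; f_equal; auto.
  - rewrite (tsubst_ext _ tvar), tsubst_id; auto.
  - rewrite (tsubst_ext _ tvar), tsubst_id; auto.
  - apply IHp. intros [|n]; unfold up, scons; simpl; auto. rewrite H. reflexivity.
Qed.

Lemma tsubst_bound k t : tbound k t -> forall s1 s2, (forall n, n < k -> s1 n = s2 n) ->
  tsubst s1 t = tsubst s2 t.
Proof. induction t; simpl; intros Hb s1 s2 H; try destruct Hb; f_equal; auto. Qed.

Lemma fsubst_bound p : forall k, fbound k p -> forall s1 s2, (forall n, n < k -> s1 n = s2 n) ->
  fsubst s1 p = fsubst s2 p.
Proof.
  induction p; simpl; intros k Hb s1 s2 H; try destruct Hb; f_equal; eauto using tsubst_bound.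
  apply (IHp (S k)); auto. intros [|n] Hn; unfold up, scons; simpl; auto.
  rewrite H; auto. lia.
Qed.

Lemma tbound_subst t : forall k j s, tbound k t -> (forall n, n < k -> tbound j (s n)) -> tbound j (tsubst s t).
Proof. induction t; simpl; intros k j s Hb H; try destruct Hb; eauto. Qed.

Lemma tbound_mono t : forall k j, tbound k t -> k <= j -> tbound j t.
Proof. induction t; simpl; intros k j Hb H; try destruct Hb; eauto; lia. Qed.

Lemma tbound_shift t k : tbound k t -> tbound (S k) (tshift t).
Proof. intro H. unfold tshift. apply (tbound_subst _ k); auto. intros; simpl; lia. Qed.

Lemma fbound_subst p : forall k j s, fbound k p -> (forall n, n < k -> tbound j (s n)) -> fbound j (fsubst s p).
Proof.
  induction p; simpl; intros k j s Hb H; try destruct Hb; eauto using tbound_subst.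
  apply (IHp (S k)); auto. intros [|n] Hn; unfold up, scons; simpl. lia.
  apply tbound_shift, H. lia.
Qed.

Lemma fbound_mono p : forall k j, fbound k p -> k <= j -> fbound j p.
Proof. induction p; simpl; intros k j Hb H; try destruct Hb; eauto using tbound_mono. eapply IHp; eauto; lia. Qed.

Lemma num_bound n k : tbound k (num n).
Proof. induction n; simpl; auto. Qed.

Lemma tsubst_num s n : tsubst s (num n) = num n.
Proof. induction n; simpl; f_equal; auto. Qed.

Lemma tshift_num n : tshift (num n) = num n.
Proof. apply tsubst_num. Qed.

Lemma sentence_subst p s : sentence p -> fsubst s p = p.
Proof. intro H. rewrite (fsubst_bound p 0 H s tvar). apply fsubst_id; auto. intros; lia. Qed.

Lemma sentence_shift p : sentence p -> fshift p = p.
Proof. apply sentence_subst. Qed.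

Lemma inst_up t s p : inst t (fsubst (up s) p) = fsubst (scons t s) p.
Proof.
  unfold inst. rewrite fsubst_comp. apply fsubst_ext. intros [|n]; unfold up, scons; simpl; auto.
  unfold tshift. rewrite tsubst_comp. simpl. apply tsubst_id.
Qed.

Lemma inst_shift t p : inst t (fshift p) = p.
Proof.
  unfold inst, fshift. rewrite fsubst_comp. apply fsubst_id. intros n. reflexivity.
Qed.

Lemma inst_var0 p : fbound 1 p -> inst (tvar 0) p = p.
Proof. intro H. unfold inst. rewrite (fsubst_bound p 1 H _ tvar). apply fsubst_id; auto.
  intros [|n] Hn; [reflexivity|lia]. Qed.

Lemma fle_subst s t u : fsubst s (fle t u) = fle (tsubst s t) (tsubst s u).
Proof.
  unfold fle, fex, fneg. simpl. unfold tshift. rewrite !tsubst_comp. repeat f_equal.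
Qed.

Inductive PL (G : list form) : form -> Prop :=
| PL_hyp p : In p G -> PL G p
| PL_K p q : PL G (fimp p (fimp q p))
| PL_S p q r : PL G (fimp (fimp p (fimp q r)) (fimp (fimp p q) (fimp p r)))
| PL_DNE p : PL G (fimp (fneg (fneg p)) p)
| PL_mp p q : PL G (fimp p q) -> PL G p -> PL G q.

Lemma PL_weak G G' p : PL G p -> incl G G' -> PL G' p.
Proof. induction 1; intros; [apply PL_hyp; auto|apply PL_K|apply PL_S|apply PL_DNE|eapply PL_mp; eauto]. Qed.

Lemma PL_id G p : PL G (fimp p p).
Proof.
  eapply PL_mp. eapply PL_mp. apply (PL_S _ p (fimp p p) p). apply PL_K. apply (PL_K _ p p).
Qed.

Lemma PL_ded G a p : PL (a :: G) p -> PL G (fimp a p).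
Proof.
  induction 1.
  - destruct H as [->|H]. apply PL_id. eapply PL_mp. apply PL_K. apply PL_hyp; auto.
  - eapply PL_mp. apply PL_K. apply PL_K.
  - eapply PL_mp. apply PL_K. apply PL_S.
  - eapply PL_mp. apply PL_K. apply PL_DNE.
  - eapply PL_mp. eapply PL_mp. apply PL_S. eauto. eauto.
Qed.

Lemma PL_mp' G p q : PL G (fimp p q) -> PL (p :: G) q.
Proof. intro H. eapply PL_mp. eapply PL_weak; eauto. intros x; simpl; auto. apply PL_hyp; simpl; auto. Qed.

Lemma PL_efq G p : PL G (fimp fbot p).
Proof.
  apply PL_ded. eapply PL_mp. apply PL_DNE. apply PL_ded. apply PL_hyp; simpl; auto.
Qed.

Fixpoint ev (v : form -> bool) (p : form) : bool :=
  match p with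
  | fbot => false
  | fimp a b => implb (ev v a) (ev v b)
  | _ => v p
  end.

Fixpoint atoms (p : form) : list form :=
  match p with
  | fbot => []
  | fimp a b => atoms a ++ atoms b
  | _ => [p]
  end.

Definition sgn (v : form -> bool) (a : form) : form := if v a then a else fneg a.
Definition lit (v : form -> bool) p := if ev v p then p else fneg p.

Lemma kalmar p : forall L v, incl (atoms p) L -> PL (map (sgn v) L) (lit v p).
Proof.
  unfold lit. induction p; intros L v Hi; simpl in *.
  - apply PL_id.
  - assert (In (feq t t0) L) by (apply Hi; simpl; auto).
    apply PL_hyp. apply (in_map (sgn v)) in H. exact H.
  - assert (H1 : incl (atoms p1) L) by (intros x Hx; apply Hi, in_or_app; auto).
    assert (H2 : incl (atoms p2) L) by (intros x Hx; apply Hi, in_or_app; auto).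
    specialize (IHp1 L v H1). specialize (IHp2 L v H2).
    destruct (ev v p1), (ev v p2); simpl.
    + eapply PL_mp. apply PL_K. auto.
    + apply PL_ded.
      eapply PL_mp. eapply PL_weak. exact IHp2. intros x; simpl; auto.
      eapply PL_mp. apply PL_hyp; simpl; auto. eapply PL_weak. exact IHp1. intros x; simpl; auto.
    + eapply PL_mp. apply PL_K. auto.
    + apply PL_ded. eapply PL_mp. apply PL_efq.
      eapply PL_mp. eapply PL_weak. exact IHp1. intros x; simpl; auto. apply PL_hyp; simpl; auto.
  - apply PL_hyp. assert (H : In (fall p) L) by (apply Hi; simpl; auto).
    apply (in_map (sgn v)) in H. exact H.
Qed.

Definition tautology p := forall v, ev v p = true.

Lemma PL_cases G a p : PL (a :: G) p -> PL (fneg a :: G) p -> PL G p.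
Proof.
  intros H1 H2. apply PL_ded in H1. apply PL_ded in H2.
  eapply PL_mp. apply PL_DNE. apply PL_ded.
  assert (W : forall q, PL G q -> PL (fneg p :: G) q) by (intros q Hq; eapply PL_weak; eauto; intros x; simpl; auto).
  assert (Hnp : PL (fneg p :: G) (fneg p)) by (apply PL_hyp; simpl; auto).
  assert (Hna : PL (fneg p :: G) (fneg a)).
  { apply PL_ded. apply (PL_mp _ p). eapply PL_weak; [exact Hnp|intros x; simpl; auto].
    apply (PL_mp _ a). eapply PL_weak; [exact H1|intros x; simpl; auto]. apply PL_hyp; simpl; auto. }
  apply (PL_mp _ p). exact Hnp. apply (PL_mp _ (fneg a)). apply W, H2. exact Hna.
Qed.

Lemma taut_PL p : tautology p -> PL [] p.
Proof.
  intro Ht.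
  assert (forall L, (forall v, PL (map (sgn v) L) p) -> PL [] p).
  { induction L; intros H. apply (H (fun _ => true)).
    apply IHL. intros v.
    destruct (in_dec (fun x y : form => ltac:(repeat decide equality)) a L) as [Hin|Hin].
    - eapply PL_weak. apply (H v). intros x [<-|Hx]; simpl. apply in_map; auto. auto.
    - set (v1 := fun b => if (ltac:(repeat decide equality) : {b = a} + {b <> a}) then true else v b).
      set (v2 := fun b => if (ltac:(repeat decide equality) : {b = a} + {b <> a}) then false else v b).
      assert (E1 : map (sgn v1) L = map (sgn v) L).
      { apply map_ext_in. intros b Hb. unfold sgn, v1. destruct (_ : {b = a} + {b <> a}); subst; tauto. }
      assert (E2 : map (sgn v2) L = map (sgn v) L).
      { apply map_ext_in. intros b Hb. unfold sgn, v2. destruct (_ : {b = a} + {b <> a}); subst; tauto. }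
      apply (PL_cases _ a).
      + specialize (H v1). simpl in H. rewrite E1 in H. unfold sgn at 1, v1 in H.
        destruct (_ : {a = a} + {a <> a}); [exact H|congruence].
      + specialize (H v2). simpl in H. rewrite E2 in H. unfold sgn at 1, v2 in H.
        destruct (_ : {a = a} + {a <> a}); [exact H|congruence]. }
  apply (H (atoms p)). intros v. pose proof (kalmar p (atoms p) v (incl_refl _)) as K.
  unfold lit in K. rewrite Ht in K. exact K.
Qed.

Lemma Prov_mono T p : Prov T p -> forall T', (forall q, T q -> T' q) -> Prov T' p.
Proof.
  induction 1; intros T' HT.
  - apply P_hyp; auto.
  - apply P_K.
  - apply P_S.
  - apply P_DNE.
  - apply P_inst.
  - apply P_allimp.
  - apply P_refl.
  - apply P_leib.
  - eapply P_mp; eauto.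
  - apply P_gen. apply IHProv. intros q [q' [H1 ->]]. exists q'; auto.
Qed.

Lemma PL_Prov T p : PL [] p -> Prov T p.
Proof. induction 1; [destruct H|apply P_K|apply P_S|apply P_DNE|eapply P_mp; eauto]. Qed.

Lemma taut_Prov T p : tautology p -> Prov T p.
Proof. intro; apply PL_Prov, taut_PL; auto. Qed.

Ltac taut := apply taut_Prov; let v := fresh "v" in intro v;
  unfold fex, fiff, fand, for_, fle, fshift, inst in *; unfold fneg in *; simpl;
  repeat match goal with
         | |- context [ev v ?a] => destruct (ev v a)
         | |- context [v ?a] => destruct (v a)
         end; reflexivity.

Lemma mp1 T a b : Prov T (fimp a b) -> Prov T a -> Prov T b.
Proof. apply P_mp. Qed.

Lemma tmp1 T a c : tautology (fimp a c) -> Prov T a -> Prov T c.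
Proof. intros H1 H2. eapply P_mp; [apply taut_Prov, H1|exact H2]. Qed.
Lemma tmp2 T a b c : tautology (fimp a (fimp b c)) -> Prov T a -> Prov T b -> Prov T c.
Proof. intros H1 H2 H3. eapply P_mp; [eapply P_mp; [apply taut_Prov, H1|exact H2]|exact H3]. Qed.
Lemma tmp3 T a b c d : tautology (fimp a (fimp b (fimp c d))) -> Prov T a -> Prov T b -> Prov T c -> Prov T d.
Proof. intros H1 H2 H3 H4. eapply P_mp; [eapply P_mp; [eapply P_mp; [apply taut_Prov, H1|exact H2]|exact H3]|exact H4]. Qed.
Lemma tmp4 T a b c d e : tautology (fimp a (fimp b (fimp c (fimp d e)))) -> Prov T a -> Prov T b -> Prov T c -> Prov T d -> Prov T e.
Proof. intros H1 H2 H3 H4 H5. eapply P_mp; [|exact H5]. eapply tmp3; eauto. Qed.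

Ltac tv := let v := fresh "v" in intro v;
  unfold fex, fiff, fand, for_, fle, fshift, inst in *; unfold fneg in *; simpl;
  repeat match goal with
         | |- context [ev v ?a] => destruct (ev v a)
         | |- context [v ?a] => destruct (v a)
         end; reflexivity.

Definition closedT (T : theory) := forall p, T p -> sentence p.

Lemma gen T p : closedT T -> Prov T p -> Prov T (fall p).
Proof.
  intros HT H. apply P_gen. eapply Prov_mono; eauto. intros q Hq. exists q. split; auto.
  symmetry; apply sentence_shift; auto.
Qed.

Lemma all_inst T p t : Prov T (fall p) -> Prov T (inst t p).
Proof. intro H. eapply P_mp. apply P_inst. exact H. Qed.

Lemma all_shift_elim T p : Prov T (fimp (fshift (fall p)) p).
Proof.
  pose proof (P_inst T (fsubst (up (fun n => tvar (S n))) p) (tvar 0)) as H.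
  rewrite inst_up in H. rewrite (fsubst_id p (scons (tvar 0) (fun n => tvar (S n)))) in H. exact H. intros [|n]; reflexivity.
Qed.

Lemma all_mono T a b : closedT T -> Prov T (fimp a b) -> Prov T (fimp (fall a) (fall b)).
Proof.
  intros HT H. eapply P_mp. apply P_allimp. apply gen; auto.
  refine (tmp2 _ _ _ _ _ (all_shift_elim T a) H). tv.
Qed.

Lemma fex_intro T p t : Prov T (fimp (inst t p) (fex p)).
Proof.
  pose proof (P_inst T (fneg p) t) as H. unfold inst in *. simpl in H.
  refine (tmp1 _ _ _ _ H). tv.
Qed.

Lemma ex_elim T p c : closedT T -> Prov T (fimp p (fshift c)) -> Prov T (fimp (fex p) c).
Proof.
  intros HT H.
  assert (H1 : Prov T (fall (fimp (fshift (fneg c)) (fneg p)))).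
  { apply gen; auto. unfold fshift at 1. simpl. refine (tmp1 _ _ _ _ H). tv. }
  pose proof (P_mp _ _ _ (P_allimp T (fneg c) (fneg p)) H1) as H2.
  refine (tmp1 _ _ _ _ H2). tv.
Qed.

Lemma deduction T' p : Prov T' p -> forall T a, (forall q, T' q -> T q \/ q = a) -> closedT T -> sentence a ->
  Prov T (fimp a p).
Proof.
  induction 1; intros T0 a HT' HT Ha.
  - destruct (HT' p H) as [H1| ->]. eapply P_mp. apply P_K. apply P_hyp; auto. taut.
  - eapply P_mp. apply P_K. apply P_K.
  - eapply P_mp. apply P_K. apply P_S.
  - eapply P_mp. apply P_K. apply P_DNE.
  - eapply P_mp. apply P_K. apply P_inst.
  - eapply P_mp. apply P_K. apply P_allimp.
  - eapply P_mp. apply P_K. apply P_refl.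
  - eapply P_mp. apply P_K. apply P_leib.
  - eapply P_mp. eapply P_mp. apply P_S. eapply IHProv1; eauto. eapply IHProv2; eauto.
  - assert (IH : Prov T0 (fimp a p)).
    { apply IHProv; auto. intros q [q' [Hq' ->]]. destruct (HT' q' Hq') as [H1| ->].
      left. rewrite sentence_shift; auto. right. apply sentence_shift; auto. }
    eapply P_mp. apply P_allimp. apply gen; auto. rewrite sentence_shift; auto.
Qed.

Lemma ded T a p : closedT T -> sentence a -> Prov (extend T a) p -> Prov T (fimp a p).
Proof. intros HT Ha H. eapply deduction; eauto. Qed.

Lemma extend_hyp T a : Prov (extend T a) a.
Proof. apply P_hyp. right; auto. Qed.

Lemma extend_lift T a p : Prov T p -> Prov (extend T a) p.
Proof. intro H. eapply Prov_mono; eauto. intros; left; auto. Qed.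

Lemma closed_extend T a : closedT T -> sentence a -> closedT (extend T a).
Proof. intros HT Ha q [H| ->]; auto. Qed.

Definition upd (s : nat -> term) k t : nat -> term := fun n => if n =? k then t else s n.

Lemma leib_at T t s sg k p :
  Prov T (fimp (feq t s) (fimp (fsubst (upd sg k t) p) (fsubst (upd sg k s) p))).
Proof.
  pose (p' := fsubst (fun n => if n =? k then tvar 0 else tshift (sg n)) p).
  pose proof (P_leib T t s p') as H. unfold p', inst in H. rewrite !fsubst_comp in H.
  assert (E : forall u, fsubst (fun n => tsubst (scons u tvar) (if n =? k then tvar 0 else tshift (sg n))) p
     = fsubst (upd sg k u) p).
  { intro u. apply fsubst_ext. intro n; unfold upd; destruct (n =? k); simpl; auto; unfold tshift; rewrite tsubst_comp; apply tsubst_id. }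
  rewrite !E in H. exact H.
Qed.

Lemma leib_rule T t s sg k p : Prov T (feq t s) -> Prov T (fsubst (upd sg k t) p) -> Prov T (fsubst (upd sg k s) p).
Proof. intros H1 H2. eapply P_mp; [eapply P_mp; [apply leib_at|exact H1]|exact H2]. Qed.

Lemma eq_sym T t s : Prov T (fimp (feq t s) (feq s t)).
Proof.
  pose proof (leib_at T t s (fun n => t) 0 (feq (tvar 0) (tvar 1))) as H. unfold upd in H; simpl in H.
  refine (tmp2 _ _ _ _ _ H (P_refl T t)). tv.
Qed.

Lemma eq_sym_rule T t s : Prov T (feq t s) -> Prov T (feq s t).
Proof. apply P_mp, eq_sym. Qed.

Lemma eq_trans T t s u : Prov T (fimp (feq t s) (fimp (feq s u) (feq t u))).
Proof.
  pose proof (leib_at T s t (fun n => u) 0 (feq (tvar 0) (tvar 1))) as H. unfold upd in H; simpl in H.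
  refine (tmp2 _ _ _ _ _ H (eq_sym T t s)). tv.
Qed.

Lemma eq_trans_rule T t s u : Prov T (feq t s) -> Prov T (feq s u) -> Prov T (feq t u).
Proof. intros; eapply P_mp; [eapply P_mp; [apply eq_trans|]|]; eauto. Qed.

Lemma cong_succ T t s : Prov T (feq t s) -> Prov T (feq (tsucc t) (tsucc s)).
Proof.
  intro H. pose proof (leib_at T t s (fun n => t) 0 (feq (tsucc (tvar 1)) (tsucc (tvar 0)))) as H1.
  unfold upd in H1; simpl in H1. refine (tmp3 _ _ _ _ _ _ H1 H (P_refl T (tsucc t))). tv.
Qed.

Lemma cong_plus T t1 s1 t2 s2 : Prov T (feq t1 s1) -> Prov T (feq t2 s2) -> Prov T (feq (tplus t1 t2) (tplus s1 s2)).
Proof.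
  intros H1 H2.
  pose proof (leib_rule T t1 s1 (fun n => match n with 2 => t1 | _ => t2 end) 0 (feq (tplus (tvar 2) (tvar 3)) (tplus (tvar 0) (tvar 1))) H1) as A.
  unfold upd in A; simpl in A. specialize (A (P_refl _ _)).
  pose proof (leib_rule T t2 s2 (fun n => match n with 1 => s1 | 2 => t1 | _ => t2 end) 0 (feq (tplus (tvar 2) (tvar 3)) (tplus (tvar 1) (tvar 0))) H2) as B.
  unfold upd in B; simpl in B. exact (B A).
Qed.

Lemma cong_mult T t1 s1 t2 s2 : Prov T (feq t1 s1) -> Prov T (feq t2 s2) -> Prov T (feq (tmult t1 t2) (tmult s1 s2)).
Proof.
  intros H1 H2.
  pose proof (leib_rule T t1 s1 (fun n => match n with 2 => t1 | _ => t2 end) 0 (feq (tmult (tvar 2) (tvar 3)) (tmult (tvar 0) (tvar 1))) H1) as A.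
  unfold upd in A; simpl in A. specialize (A (P_refl _ _)).
  pose proof (leib_rule T t2 s2 (fun n => match n with 1 => s1 | 2 => t1 | _ => t2 end) 0 (feq (tmult (tvar 2) (tvar 3)) (tmult (tvar 1) (tvar 0))) H2) as B.
  unfold upd in B; simpl in B. exact (B A).
Qed.

Definition RT (T : theory) := forall p, R_axiom p -> Prov T p.

Fixpoint teval (e : nat -> nat) (t : term) : nat :=
  match t with
  | tvar n => e n
  | tzero => 0
  | tsucc u => S (teval e u)
  | tplus u v => teval e u + teval e v
  | tmult u v => teval e u * teval e v
  end.

Definition nums (e : nat -> nat) : nat -> term := fun n => num (e n).

Lemma term_eval T e t : RT T -> Prov T (feq (tsubst (nums e) t) (num (teval e t))).
Proof.
  intro HR. induction t; simpl.
  - apply P_refl.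
  - apply P_refl.
  - apply cong_succ; auto.
  - eapply eq_trans_rule. apply cong_plus; eauto. apply HR. left. eauto.
  - eapply eq_trans_rule. apply cong_mult; eauto. apply HR. right; left. eauto.
Qed.

Lemma closed_eval T t e : RT T -> (forall s, tsubst s t = t) -> Prov T (feq t (num (teval e t))).
Proof.
  intros HR H. pose proof (term_eval T e t HR). rewrite H in H0. exact H0.
Qed.

Lemma tsubst_nums_closed s e t : tsubst s (tsubst (nums e) t) = tsubst (nums e) t.
Proof. rewrite tsubst_comp. apply tsubst_ext. intro; apply tsubst_num. Qed.

Fixpoint bigor_t (t : term) (n : nat) : form :=
  match n with
  | 0 => feq t (num 0)
  | S k => for_ (bigor_t t k) (feq t (num (S k)))
  end.

Lemma bigor_subst s n : fsubst s (bigor_eq n) = bigor_t (s 0) n.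
Proof. induction n; simpl; rewrite ?tsubst_num; auto. unfold for_, fneg in *. simpl. rewrite IHn, ?tsubst_num. auto. Qed.

Lemma ax_le T t n : RT T -> Prov T (fimp (fle t (num n)) (bigor_t t n)).
Proof.
  intro HR. pose proof (all_inst T _ t (HR _ (or_intror (or_intror (or_intror (or_introl (ex_intro _ n eq_refl))))))).
  unfold inst in H. cbn [fsubst] in H. rewrite fle_subst, bigor_subst in H. simpl in H. rewrite tsubst_num in H. exact H.
Qed.

Lemma ax_tot T t n : RT T -> Prov T (for_ (fle t (num n)) (fle (num n) t)).
Proof.
  intro HR. pose proof (all_inst T _ t (HR _ (or_intror (or_intror (or_intror (or_intror (ex_intro _ n eq_refl))))))).
  unfold inst, for_, fneg in H. cbn [fsubst] in H. rewrite !fle_subst in H. simpl in H. rewrite !tsubst_num in H. exact H.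
Qed.

Lemma num_neq T a b : RT T -> a <> b -> Prov T (fneg (feq (num a) (num b))).
Proof. intros HR H. apply HR. right; right; left. eauto. Qed.

Lemma bigor_elim T t n X : (forall i, i <= n -> Prov T (fimp (feq t (num i)) X)) -> Prov T (fimp (bigor_t t n) X).
Proof.
  induction n; intro H; simpl. apply (H 0); auto.
  refine (tmp2 _ _ _ _ _ (IHn (fun i Hi => H i ltac:(lia))) (H (S n) (le_n _))). tv.
Qed.

Lemma num_le T i n : RT T -> i <= n -> Prov T (fle (num i) (num n)).
Proof.
  intros HR Hi. pose proof (fex_intro T (feq (tplus (tvar 0) (tshift (num i))) (tshift (num n))) (num (n - i))) as H.
  unfold inst in H. simpl in H. rewrite !tshift_num, !tsubst_num in H.
  eapply P_mp. unfold fle. rewrite !tshift_num. exact H.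
  replace n with (n - i + i) at 2 by lia. apply HR. left; eauto.
Qed.

Lemma bigor_false T a n : RT T -> n < a -> Prov T (fneg (bigor_t (num a) n)).
Proof.
  intros HR H. induction n; simpl. apply (num_neq T a 0); auto; lia.
  refine (tmp2 _ _ _ _ _ (IHn ltac:(lia)) (num_neq T a (S n) HR ltac:(lia))). tv.
Qed.

Lemma num_not_le T a b : RT T -> b < a -> Prov T (fneg (fle (num a) (num b))).
Proof.
  intros HR H. refine (tmp2 _ _ _ _ _ (ax_le T (num a) b HR) (bigor_false T a b HR H)). tv.
Qed.

Inductive d0 : Type :=
| DEq : term -> term -> d0
| DLe : term -> term -> d0
| DNeg : d0 -> d0
| DImp : d0 -> d0 -> d0
| DAnd : d0 -> d0 -> d0
| DAll : term -> d0 -> d0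
| DEx : term -> d0 -> d0.

Fixpoint tr (a : d0) : form :=
  match a with
  | DEq t s => feq t s
  | DLe t s => fle t s
  | DNeg b => fneg (tr b)
  | DImp b c => fimp (tr b) (tr c)
  | DAnd b c => fand (tr b) (tr c)
  | DAll t b => fall (fimp (fle (tvar 0) (tshift t)) (tr b))
  | DEx t b => fneg (fall (fimp (fle (tvar 0) (tshift t)) (fneg (tr b))))
  end.

Fixpoint evalp (e : nat -> nat) (a : d0) : Prop :=
  match a with
  | DEq t s => teval e t = teval e s
  | DLe t s => teval e t <= teval e s
  | DNeg b => ~ evalp e b
  | DImp b c => evalp e b -> evalp e c
  | DAnd b c => evalp e b /\ evalp e c
  | DAll t b => forall y, y <= teval e t -> evalp (scons y e) b
  | DEx t b => exists y, y <= teval e t /\ evalp (scons y e) b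
  end.

Fixpoint evalb (e : nat -> nat) (a : d0) : bool :=
  match a with
  | DEq t s => Nat.eqb (teval e t) (teval e s)
  | DLe t s => Nat.leb (teval e t) (teval e s)
  | DNeg b => negb (evalb e b)
  | DImp b c => implb (evalb e b) (evalb e c)
  | DAnd b c => andb (evalb e b) (evalb e c)
  | DAll t b => forallb (fun y => evalb (scons y e) b) (seq 0 (S (teval e t)))
  | DEx t b => existsb (fun y => evalb (scons y e) b) (seq 0 (S (teval e t)))
  end.

Lemma evalb_spec a : forall e, evalb e a = true <-> evalp e a.
Proof.
  induction a; intro e; cbn [evalb evalp].
  - apply Nat.eqb_eq.
  - apply Nat.leb_le.
  - rewrite negb_true_iff, <- IHa. destruct (evalb e a); split; congruence.
  - rewrite <- IHa1, <- IHa2. destruct (evalb e a1), (evalb e a2); simpl; intuition congruence.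
  - rewrite andb_true_iff, IHa1, IHa2. tauto.
  - rewrite forallb_forall. split.
    + intros H y Hy. apply IHa, H. apply in_seq. lia.
    + intros H y Hy. apply in_seq in Hy. apply IHa, H. lia.
  - rewrite existsb_exists. split.
    + intros [y [Hy H]]. apply in_seq in Hy. exists y. split. lia. apply IHa, H.
    + intros [y [Hy H]]. exists y. split. apply in_seq; lia. apply IHa, H.
Qed.

Lemma tsubst_up_shift s t : tsubst (up s) (tshift t) = tshift (tsubst s t).
Proof. unfold tshift. rewrite !tsubst_comp. apply tsubst_ext. intro. reflexivity. Qed.

Lemma up_nums_scons e A : fsubst (up (nums e)) A = fsubst (upd (nums (scons 0 e)) 0 (tvar 0)) A /\
   forall i, fsubst (upd (nums (scons 0 e)) 0 (num i)) A = fsubst (nums (scons i e)) A.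
Proof.
  split; [|intro i]; apply fsubst_ext; intros [|n]; unfold up, upd, scons, nums; simpl; auto.
  apply tshift_num.
Qed.

Lemma inst_up_nums e A i : inst (num i) (fsubst (up (nums e)) A) = fsubst (nums (scons i e)) A.
Proof. rewrite inst_up. apply fsubst_ext. intros [|n]; reflexivity. Qed.

Lemma bounded_all T e t A : RT T -> closedT T ->
  ((forall i, i <= teval e t -> Prov T (fsubst (nums (scons i e)) A)) ->
    Prov T (fall (fimp (fle (tvar 0) (tsubst (up (nums e)) (tshift t))) (fsubst (up (nums e)) A)))) /\
  (forall i, i <= teval e t -> Prov T (fneg (fsubst (nums (scons i e)) A)) ->
    Prov T (fneg (fall (fimp (fle (tvar 0) (tsubst (up (nums e)) (tshift t))) (fsubst (up (nums e)) A))))).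
Proof.
  intros HR HT. rewrite tsubst_up_shift. set (tau := tsubst (nums e) t).
  assert (Ht : tshift tau = tau) by apply tsubst_nums_closed. rewrite Ht.
  assert (Hev : Prov T (feq tau (num (teval e t)))) by apply term_eval, HR.
  set (n := teval e t) in *. split.
  - intros H. apply gen; auto.
    pose proof (leib_at T tau (num n) (fun k => tvar (pred k)) 0 (fle (tvar 1) (tvar 0))) as L1.
    rewrite !fle_subst in L1. unfold upd in L1. simpl in L1.
    assert (L2 : Prov T (fimp (bigor_t (tvar 0) n) (fsubst (up (nums e)) A))).
    { apply bigor_elim. intros i Hi.
      pose proof (leib_at T (num i) (tvar 0) (nums (scons 0 e)) 0 A) as L3.
      destruct (up_nums_scons e A) as [E1 E2]. rewrite E2, <- E1 in L3.
      refine (tmp3 _ _ _ _ _ _ L3 (eq_sym T (tvar 0) (num i)) (H i Hi)). tv. }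
    refine (tmp4 _ _ _ _ _ _ _ L1 Hev (ax_le T (tvar 0) n HR) L2). tv.
  - intros i Hi H.
    pose proof (P_inst T (fimp (fle (tvar 0) tau) (fsubst (up (nums e)) A)) (num i)) as L1.
    change (inst (num i) (fimp ?P ?Q)) with (fimp (inst (num i) P) (inst (num i) Q)) in L1.
    rewrite inst_up_nums in L1. unfold inst in L1. rewrite fle_subst in L1. simpl in L1.
    unfold tau in L1. rewrite tsubst_nums_closed in L1. fold tau in L1.
    pose proof (leib_at T (num n) tau (fun k => num i) 0 (fle (tvar 1) (tvar 0))) as L2.
    rewrite !fle_subst in L2. unfold upd in L2. simpl in L2.
    pose proof (mp1 _ _ _ (mp1 _ _ _ L2 (eq_sym_rule _ _ _ Hev)) (num_le T i n HR Hi)) as L4.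
    refine (tmp3 _ _ _ _ _ _ L1 L4 H). clear. tv.
Qed.

Lemma fsubst_tr_all s t a : fsubst s (tr (DAll t a)) =
  fall (fimp (fle (tvar 0) (tsubst (up s) (tshift t))) (fsubst (up s) (tr a))).
Proof. cbn [tr fsubst]. rewrite fle_subst. reflexivity. Qed.

Lemma fsubst_tr_ex s t a : fsubst s (tr (DEx t a)) =
  fneg (fall (fimp (fle (tvar 0) (tsubst (up s) (tshift t))) (fsubst (up s) (fneg (tr a))))).
Proof. cbn [tr fsubst]. unfold fneg. cbn [fsubst]. rewrite fle_subst. reflexivity. Qed.

Lemma forallb_false_ex {A} (f : A -> bool) l : forallb f l = false -> exists x, In x l /\ f x = false.
Proof. induction l; simpl; [discriminate|]. destruct (f a) eqn:E; simpl; intro H; eauto.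
  destruct (IHl H) as [x [H1 H2]]; eauto. Qed.

Lemma d0_complete T a : RT T -> closedT T -> forall e,
  (evalb e a = true -> Prov T (fsubst (nums e) (tr a))) /\
  (evalb e a = false -> Prov T (fneg (fsubst (nums e) (tr a)))).
Proof.
  intros HR HT. induction a; intro e.
  - cbn [tr evalb fsubst].
    pose proof (term_eval T e t HR) as H1. pose proof (term_eval T e t0 HR) as H2.
    set (t' := tsubst (nums e) t) in *. set (s' := tsubst (nums e) t0) in *.
    split; intro H.
    + apply Nat.eqb_eq in H. rewrite H in H1. eapply eq_trans_rule. exact H1. apply eq_sym_rule, H2.
    + apply Nat.eqb_neq in H.
      pose proof (num_neq T _ _ HR H) as H3.
      pose proof (eq_trans T (num (teval e t)) t' s') as H4.
      pose proof (eq_trans T (num (teval e t)) s' (num (teval e t0))) as H5.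
      pose proof (eq_sym_rule _ _ _ H1) as H6.
      pose proof (mp1 _ _ _ H4 H6) as M.
      refine (tmp4 _ _ _ _ _ _ _ M H5 H2 H3). clear. tv.
  - cbn [tr evalb]. rewrite fle_subst.
    pose proof (term_eval T e t HR) as H1. pose proof (term_eval T e t0 HR) as H2.
    set (t' := tsubst (nums e) t) in *. set (s' := tsubst (nums e) t0) in *.
    pose proof (leib_at T (num (teval e t)) t' (fun k => num (teval e t0)) 0 (fle (tvar 0) (tvar 1))) as L1.
    pose proof (leib_at T (num (teval e t0)) s' (fun k => t') 0 (fle (tvar 1) (tvar 0))) as L2.
    pose proof (leib_at T t' (num (teval e t)) (fun k => s') 0 (fle (tvar 0) (tvar 1))) as L3.
    pose proof (leib_at T s' (num (teval e t0)) (fun k => num (teval e t)) 0 (fle (tvar 1) (tvar 0))) as L4.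
    rewrite !fle_subst in L1, L2, L3, L4. unfold upd in L1, L2, L3, L4. simpl in L1, L2, L3, L4.
    pose proof (eq_sym_rule _ _ _ H1) as H1'. pose proof (eq_sym_rule _ _ _ H2) as H2'.
    split; intro H.
    + apply Nat.leb_le in H. pose proof (num_le T _ _ HR H) as H3.
      exact (mp1 _ _ _ (mp1 _ _ _ L2 H2') (mp1 _ _ _ (mp1 _ _ _ L1 H1') H3)).
    + apply Nat.leb_gt in H. pose proof (num_not_le T _ _ HR H) as H3.
      pose proof (mp1 _ _ _ L3 H1) as M3. pose proof (mp1 _ _ _ L4 H2) as M4.
      refine (tmp3 _ _ _ _ _ _ M3 M4 H3). clear. tv.
  - cbn [tr evalb]. destruct (IHa e) as [I1 I2]. change (fsubst (nums e) (fneg (tr a))) with (fneg (fsubst (nums e) (tr a))).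
    destruct (evalb e a); simpl; split; intro H; try discriminate.
    + refine (tmp1 _ _ _ _ (I1 eq_refl)). tv.
    + auto.
  - cbn [tr evalb fsubst]. destruct (IHa1 e) as [I1 I2]. destruct (IHa2 e) as [J1 J2].
    destruct (evalb e a1), (evalb e a2); simpl; split; intro H; try discriminate.
    + refine (tmp1 _ _ _ _ (J1 eq_refl)). tv.
    + refine (tmp2 _ _ _ _ _ (I1 eq_refl) (J2 eq_refl)). tv.
    + refine (tmp1 _ _ _ _ (J1 eq_refl)). tv.
    + refine (tmp1 _ _ _ _ (I2 eq_refl)). tv.
  - cbn [tr evalb]. unfold fand, fneg. cbn [fsubst]. fold (fneg (fsubst (nums e) (tr a2))).
    fold (fneg (fimp (fsubst (nums e) (tr a1)) (fneg (fsubst (nums e) (tr a2))))).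
    destruct (IHa1 e) as [I1 I2]. destruct (IHa2 e) as [J1 J2].
    destruct (evalb e a1), (evalb e a2); simpl; split; intro H; try discriminate.
    + refine (tmp2 _ _ _ _ _ (I1 eq_refl) (J1 eq_refl)). tv.
    + refine (tmp1 _ _ _ _ (J2 eq_refl)). tv.
    + refine (tmp1 _ _ _ _ (I2 eq_refl)). tv.
    + refine (tmp1 _ _ _ _ (I2 eq_refl)). tv.
  - rewrite fsubst_tr_all. destruct (bounded_all T e t (tr a) HR HT) as [B1 B2]. cbn [evalb].
    split; intro H.
    + apply B1. intros i Hi. apply (IHa (scons i e)).
      rewrite forallb_forall in H. apply H. apply in_seq. lia.
    + destruct (forallb_false_ex _ _ H) as [i [Hi Hf]]. apply in_seq in Hi.
      apply (B2 i ltac:(lia)). apply (IHa (scons i e)), Hf.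
  - rewrite fsubst_tr_ex. destruct (bounded_all T e t (fneg (tr a)) HR HT) as [B1 B2]. cbn [evalb].
    split; intro H.
    + apply existsb_exists in H. destruct H as [i [Hi Hf]]. apply in_seq in Hi.
      apply (B2 i ltac:(lia)). cbn [fsubst]. refine (tmp1 _ _ _ _ (proj1 (IHa (scons i e)) Hf)). tv.
    + refine (tmp1 _ _ _ _ (B1 _)). tv. intros i Hi. cbn [fsubst]. apply (IHa (scons i e)).
      destruct (evalb (scons i e) a) eqn:E; auto.
      assert (existsb (fun y => evalb (scons y e) a) (seq 0 (S (teval e t))) = true); [|congruence].
      apply existsb_exists. exists i. split; auto. apply in_seq. lia.
Qed.

Fixpoint tri (s : nat) : nat := match s with 0 => 0 | S k => tri k + S k end.
Lemma tri_spec s : s * (s + 1) = 2 * tri s.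
Proof. induction s; simpl; lia. Qed.

Lemma pair_eq a b : pair a b = tri (a + b) + b.
Proof. unfold pair. rewrite tri_spec. rewrite (Nat.mul_comm 2). rewrite Nat.div_mul; lia. Qed.

Lemma pair_spec a b : pair a b + pair a b = (a + b) * S (a + b) + (b + b).
Proof. rewrite pair_eq. replace (S (a+b)) with (a + b + 1) by lia. rewrite tri_spec. lia. Qed.

Lemma pairEq_iff x a b : x + x = (a + b) * S (a + b) + (b + b) <-> x = pair a b.
Proof. rewrite <- pair_spec. lia. Qed.

Lemma tri_mono s s' : s <= s' -> tri s <= tri s'.
Proof. induction 1; simpl; lia. Qed.

Lemma tri_lt s s' : s < s' -> tri s + s < tri s'.
Proof. intro H. induction H; simpl; lia. Qed.

Lemma pair_inj a b a' b' : pair a b = pair a' b' -> a = a' /\ b = b'.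
Proof.
  rewrite !pair_eq. intro H.
  assert (a + b = a' + b').
  { destruct (Nat.lt_trichotomy (a + b) (a' + b')) as [L|[L|L]]; auto.
    pose proof (tri_lt _ _ L); lia. pose proof (tri_lt _ _ L); lia. }
  rewrite H0 in H. lia.
Qed.

Lemma pair_ge_l a b : a <= pair a b.
Proof. rewrite pair_eq. pose proof (tri_mono a (a+b)). assert (a <= tri a) by (induction a; simpl; lia). lia. Qed.
Lemma pair_ge_r a b : b <= pair a b.
Proof. rewrite pair_eq. lia. Qed.
Lemma pair_mono a b a' b' : a <= a' -> b <= b' -> pair a b <= pair a' b'.
Proof. intros. rewrite !pair_eq. pose proof (tri_mono (a+b) (a'+b')). lia. Qed.

Definition cn (n : nat) : nat := code_term (num n).
Lemma cn_0 : cn 0 = 1. Proof. reflexivity. Qed.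
Lemma cn_S n : cn (S n) = pair 2 (cn n). Proof. reflexivity. Qed.
Lemma cn_mono n : cn n < cn (S n).
Proof. rewrite cn_S. rewrite pair_eq. simpl. lia. Qed.
Lemma cn_mono' n m : n <= m -> cn n <= cn m.
Proof. induction 1; auto. pose proof (cn_mono m). lia. Qed.
Lemma pair01 : pair 0 1 = 2. Proof. reflexivity. Qed.

Definition InS (K P v : nat) := exists q, q <= P /\ q * S ((v + 1) * K) = P.

Lemma chain_sound x z Z K P :
  Z = pair x z -> 2 <= Z -> InS K P 2 -> InS K P Z ->
  (forall i u v, i <= Z -> u <= Z -> v <= Z -> v = pair i u -> InS K P v -> v <> Z ->
     exists r v', r <= Z /\ v' <= Z /\ r = pair 2 u /\ v' = pair (S i) r /\ InS K P v') ->
  z = cn x.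
Proof.
  intros HZ H2 HI2 HIZ Hstep.
  assert (Cl : forall k, (forall j, j < k -> pair j (cn j) <> Z) -> InS K P (pair k (cn k)) /\ pair k (cn k) <= Z).
  { induction k; intro Hj. split; [exact HI2|exact H2].
    destruct IHk as [I1 I2]. intros j Hj'; apply Hj; lia.
    destruct (Hstep k (cn k) (pair k (cn k))) as [r [v' [R1 [R2 [R3 [R4 R5]]]]]]; auto.
    pose proof (pair_ge_l k (cn k)); lia. pose proof (pair_ge_r k (cn k)); lia.
    subst r v'. rewrite cn_S. auto. }
  assert (Ex : exists j, j <= Z /\ pair j (cn j) = Z).
  { assert (D : forall k, (exists j, j < k /\ pair j (cn j) = Z) \/ (forall j, j < k -> pair j (cn j) <> Z)).
    { induction k. right; intros; lia.
      destruct IHk as [[j [Hj1 Hj2]]|Hn]. left; exists j; split; auto; lia.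
      destruct (Nat.eq_dec (pair k (cn k)) Z). left; exists k; split; auto.
      right; intros j Hj. destruct (Nat.eq_dec j k). subst; auto. apply Hn; lia. }
    destruct (D (S Z)) as [[j [Hj1 Hj2]]|Hn]. exists j; split; auto; lia.
    destruct (Cl (S Z) Hn) as [_ Hle]. pose proof (pair_ge_l (S Z) (cn (S Z))). lia. }
  destruct Ex as [j [_ Hj]]. rewrite HZ in Hj. apply pair_inj in Hj. destruct Hj; subst; auto.
Qed.

Lemma divide_fact n N : 1 <= n -> n <= N -> Nat.divide n (fact N).
Proof.
  intros H1 H2. induction H2.
  - destruct n. lia. simpl. exists (fact n). lia.
  - simpl. apply Nat.divide_add_r; auto. apply Nat.divide_mul_r. auto.
Qed.

Lemma fact_pos n : 0 < fact n.
Proof. induction n; simpl; lia. Qed.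

Lemma mods_coprime K Z u v : K = fact (S Z) -> u < v -> v <= Z ->
  Nat.gcd (S ((u + 1) * K)) (S ((v + 1) * K)) = 1.
Proof.
  intros HK Huv HvZ. set (d := Nat.gcd (S ((u + 1) * K)) (S ((v + 1) * K))).
  assert (D1 : Nat.divide d (S ((u + 1) * K))) by apply Nat.gcd_divide_l.
  assert (D2 : Nat.divide d (S ((v + 1) * K))) by apply Nat.gcd_divide_r.
  assert (D3 : Nat.divide d (v - u)).
  { replace (v - u) with ((v + 1) * S ((u + 1) * K) - (u + 1) * S ((v + 1) * K)) by nia.
    apply Nat.divide_sub_r; apply Nat.divide_mul_r; auto. }
  assert (D4 : Nat.divide d K).
  { eapply Nat.divide_trans. exact D3. rewrite HK. apply divide_fact; lia. }
  assert (D5 : Nat.divide d 1).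
  { replace 1 with (S ((u + 1) * K) - (u + 1) * K) by lia.
    apply Nat.divide_sub_r; auto. apply Nat.divide_mul_r; auto. }
  apply Nat.divide_1_r; auto.
Qed.

Fixpoint prodf (f : nat -> nat) (n : nat) : nat :=
  match n with 0 => f 0 | S k => f (S k) * prodf f k end.

Lemma prodf_divide f n k : k <= n -> Nat.divide (f k) (prodf f n).
Proof.
  induction 1. destruct k; simpl. apply Nat.divide_refl. apply Nat.divide_mul_l, Nat.divide_refl.
  simpl. apply Nat.divide_mul_r. auto.
Qed.

Lemma prodf_pos f n : (forall k, 0 < f k) -> 0 < prodf f n.
Proof. intro H. induction n; simpl; auto. specialize (H (S n)). nia. Qed.

Lemma prodf_coprime f n m : (forall k, k <= n -> Nat.gcd m (f k) = 1) -> Nat.divide m (prodf f n) -> Nat.divide m 1.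
Proof.
  induction n; simpl; intros H1 H2.
  - apply (Nat.gauss _ (f 0)). rewrite Nat.mul_1_r. auto. auto.
  - apply IHn. intros; apply H1; lia. apply (Nat.gauss _ (f (S n))); auto.
Qed.

Section ChainEx.
Definition chK x := fact (S (pair x (cn x))).
Definition chf x k := S ((pair k (cn k) + 1) * chK x).
Definition chP x := prodf (chf x) x.

Lemma chain_mem x v : v <= pair x (cn x) -> (InS (chK x) (chP x) v <-> exists k, k <= x /\ v = pair k (cn k)).
Proof.
  intro Hv. unfold InS. split.
  - intros [q [_ Hq]]. 
    assert (D : forall n, (exists k, k <= n /\ v = pair k (cn k)) \/ (forall k, k <= n -> v <> pair k (cn k))).
    { induction n. destruct (Nat.eq_dec v (pair 0 (cn 0))). left; exists 0; auto. right; intros k Hk; replace k with 0 by lia; auto.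
      destruct IHn as [[k [Hk1 Hk2]]|Hn]. left; exists k; split; auto.
      destruct (Nat.eq_dec v (pair (S n) (cn (S n)))). left; exists (S n); auto.
      right; intros k Hk. destruct (Nat.eq_dec k (S n)). subst; auto. apply Hn; lia. }
    destruct (D x) as [E|E]; [exact E|exfalso].
    assert (Hdiv : Nat.divide (S ((v + 1) * chK x)) (chP x)) by (exists q; lia).
    apply prodf_coprime in Hdiv.
    + apply Nat.divide_1_r in Hdiv. pose proof (fact_pos (S (pair x (cn x)))). unfold chK in Hdiv. nia.
    + intros k Hk. unfold chf. assert (pair k (cn k) <= pair x (cn x)) by (apply pair_mono; auto; apply cn_mono'; auto).
      specialize (E k Hk). destruct (Nat.lt_trichotomy v (pair k (cn k))) as [L|[L|L]]; [|contradiction|].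
      * apply (mods_coprime _ (pair x (cn x))); auto.
      * rewrite Nat.gcd_comm. apply (mods_coprime _ (pair x (cn x))); auto.
  - intros [k [Hk ->]]. destruct (prodf_divide (chf x) x k Hk) as [q Hq].
    exists q. split. unfold chP. rewrite Hq. unfold chf. nia. unfold chP; rewrite Hq; unfold chf. reflexivity.
Qed.
End ChainEx.

Fixpoint dsubst (s : nat -> term) (a : d0) : d0 :=
  match a with
  | DEq t u => DEq (tsubst s t) (tsubst s u)
  | DLe t u => DLe (tsubst s t) (tsubst s u)
  | DNeg b => DNeg (dsubst s b)
  | DImp b c => DImp (dsubst s b) (dsubst s c)
  | DAnd b c => DAnd (dsubst s b) (dsubst s c)
  | DAll t b => DAll (tsubst s t) (dsubst (up s) b)
  | DEx t b => DEx (tsubst s t) (dsubst (up s) b)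
  end.

Lemma tr_dsubst a : forall s, tr (dsubst s a) = fsubst s (tr a).
Proof.
  induction a; intro s; cbn [tr dsubst fsubst]; rewrite ?fle_subst, ?IHa, ?IHa1, ?IHa2; auto;
  unfold fand, fneg; cbn [fsubst]; rewrite ?fle_subst; simpl; rewrite ?tsubst_up_shift; auto.
Qed.

Lemma teval_ext t : forall e1 e2, (forall n, e1 n = e2 n) -> teval e1 t = teval e2 t.
Proof. induction t; simpl; intros; auto. Qed.

Lemma teval_subst t : forall e s, teval e (tsubst s t) = teval (fun n => teval e (s n)) t.
Proof. induction t; simpl; intros; auto. Qed.

Lemma teval_shift e y t : teval (scons y e) (tshift t) = teval e t.
Proof. unfold tshift. rewrite teval_subst. apply teval_ext. reflexivity. Qed.

Lemma evalp_ext a : forall e1 e2, (forall n, e1 n = e2 n) -> (evalp e1 a <-> evalp e2 a).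
Proof.
  induction a; intros e1 e2 H; cbn [evalp].
  - rewrite (teval_ext t e1 e2 H), (teval_ext t0 e1 e2 H). tauto.
  - rewrite (teval_ext t e1 e2 H), (teval_ext t0 e1 e2 H). tauto.
  - rewrite (IHa e1 e2 H). tauto.
  - rewrite (IHa1 e1 e2 H), (IHa2 e1 e2 H). tauto.
  - rewrite (IHa1 e1 e2 H), (IHa2 e1 e2 H). tauto.
  - rewrite (teval_ext t e1 e2 H). split; intros H1 y Hy; (eapply IHa; [|apply H1, Hy]); intros [|n]; simpl; auto.
  - rewrite (teval_ext t e1 e2 H). split; intros [y [Hy H1]]; exists y; split; auto; (eapply IHa; [|exact H1]); intros [|n]; simpl; auto.
Qed.

Lemma evalp_subst a : forall e s, evalp e (dsubst s a) <-> evalp (fun n => teval e (s n)) a.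
Proof.
  induction a; intros e s; cbn [evalp dsubst]; rewrite ?teval_subst; try tauto.
  - rewrite IHa. tauto.
  - rewrite IHa1, IHa2. tauto.
  - rewrite IHa1, IHa2. tauto.
  - assert (E : forall y n, teval (scons y e) (up s n) = scons y (fun n => teval e (s n)) n).
    { intros y [|n]; [reflexivity|]. unfold up. cbn [scons]. apply teval_shift. }
    split; intros H1 y Hy; specialize (H1 y Hy); rewrite IHa in *; (eapply evalp_ext; [|exact H1]);
    intro n; simpl; rewrite E; auto.
  - assert (E : forall y n, teval (scons y e) (up s n) = scons y (fun n => teval e (s n)) n).
    { intros y [|n]; [reflexivity|]. unfold up. cbn [scons]. apply teval_shift. }
    split; intros [y [Hy H1]]; exists y; split; auto; rewrite IHa in *; (eapply evalp_ext; [|exact H1]);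
    intro n; simpl; rewrite E; auto.
Qed.

Definition PE (a b c : term) : d0 :=
  DEq (tplus a a) (tplus (tmult (tplus b c) (tsucc (tplus b c))) (tplus c c)).
Definition InD (v K P : term) : d0 :=
  DEx P (DEq (tmult (tvar 0) (tsucc (tmult (tsucc (tshift v)) (tshift K)))) (tshift P)).

Definition Bd : d0 :=
  DAnd (DLe (tvar 1) (tvar 0))
  (DEx (tvar 0) (DEx (tvar 1) (DEx (tvar 2) (DEx (tvar 3) (DEx (tvar 4)
   (DAnd (DEx (tvar 7) (DEx (tvar 8)
           (DAnd (PE (tvar 1) (num 26) (tvar 6)) (DAnd (PE (tvar 0) (num 2) (tvar 1)) (PE (tvar 9) (num 3) (tvar 0))))))
   (DAnd (DEx (tvar 6) (DEx (tvar 7) (DEx (tvar 8) (DEx (tvar 9)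
           (DAnd (PE (tvar 3) (num 0) (tvar 7)) (DAnd (PE (tvar 2) (num 1) (tvar 3))
           (DAnd (PE (tvar 1) (tvar 2) (tvar 8)) (DAnd (PE (tvar 0) (num 2) (tvar 1)) (PE (tvar 10) (num 3) (tvar 0))))))))))
   (DAnd (PE (tvar 2) (tvar 7) (tvar 3))
   (DAnd (DLe (num 2) (tvar 2))
   (DAnd (DNeg (DEq (tvar 0) tzero))
   (DAnd (InD (num 2) (tvar 1) (tvar 0))
   (DAnd (InD (tvar 2) (tvar 1) (tvar 0))
   (DAll (tvar 2) (DAll (tvar 3) (DAll (tvar 4)
     (DImp (PE (tvar 0) (tvar 2) (tvar 1)) (DImp (InD (tvar 0) (tvar 4) (tvar 3)) (DImp (DNeg (DEq (tvar 0) (tvar 5)))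
       (DEx (tvar 5) (DEx (tvar 6)
         (DAnd (PE (tvar 1) (num 2) (tvar 3)) (DAnd (PE (tvar 0) (tsucc (tvar 4)) (tvar 1)) (InD (tvar 0) (tvar 6) (tvar 5))))))))))))
   )))))))))))).

Definition sigB : nat -> term := fun n => match n with 0 => tvar 0 | 1 => tvar 1 | _ => tvar 4 end.

Definition Body : d0 :=
  DAnd Bd (DAll (tvar 0) (DAll (tvar 1) (DImp (dsubst sigB Bd) (DEq (tvar 1) (tvar 3))))).

Definition env3 (w y x : nat) : nat -> nat := scons w (scons y (fun _ => x)).

Definition Fy x K := pair 3 (pair 2 (pair (pair 1 (pair 0 (cn x))) K)).

Lemma evalp_PE e a b c : evalp e (PE a b c) <-> teval e a = pair (teval e b) (teval e c).
Proof. unfold PE. cbn [evalp teval]. apply pairEq_iff. Qed.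

Lemma evalp_InD e v K P : evalp e (InD v K P) <-> InS (teval e K) (teval e P) (teval e v).
Proof. unfold InD, InS. cbn [evalp teval]. setoid_rewrite teval_shift. cbn [scons].
  split; intros [q [H1 H2]]; exists q; split; auto; rewrite <- H2; f_equal; f_equal; f_equal; lia. Qed.

Ltac bd_unfold := unfold Bd; cbn -[PE InD pair]; setoid_rewrite evalp_PE; setoid_rewrite evalp_InD; cbn -[pair].

Lemma Bd_sound w y x : evalp (env3 w y x) Bd -> y <= w /\ exists K, x = pair 3 (pair 2 (pair 26 K)) /\ y = Fy x K.
Proof.
  bd_unfold. intros H.
  destruct H as [Hyw [K [HK [z [Hz [Z [HZ [Kk [HKk [P [HP H]]]]]]]]]]].
  destruct H as [[a1 [_ [a2 [_ [E1 [E2 E3]]]]]] [[b1 [_ [b2 [_ [b3 [_ [b4 [_ [F1 [F2 [F3 [F4 F5]]]]]]]]]]]] [G1 [G2 [G3 [G4 [G5 G6]]]]]]].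
  split; auto. exists K. split. subst; auto.
  assert (z = cn x).
  { apply (chain_sound x z Z Kk P); auto.
    intros i u v Hi Hu Hv E HIn Hne.
    destruct (G6 i Hi u Hu v Hv E HIn Hne) as [r [Hr [v' [Hv' [R1 [R2 R3]]]]]].
    exists r, v'. auto. }
  unfold Fy. subst. auto.
Qed.

Lemma Bd_func w y x w' y' : evalp (env3 w y x) Bd -> evalp (env3 w' y' x) Bd -> y = y'.
Proof.
  intros H1 H2. destruct (Bd_sound _ _ _ H1) as [_ [K [E1 E2]]]. destruct (Bd_sound _ _ _ H2) as [_ [K' [E1' E2']]].
  rewrite E1 in E1'. apply pair_inj in E1' as [_ E1']. apply pair_inj in E1' as [_ E1']. apply pair_inj in E1' as [_ E1'].
  subst; auto.
Qed.

Lemma Bd_exists K : let x := pair 3 (pair 2 (pair 26 K)) in exists w, Fy x K <= w /\ evalp (env3 w (Fy x K) x) Bd.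
Proof.
  intro x.
  assert (Kx : K <= x) by (unfold x; repeat (eapply Nat.le_trans; [|apply pair_ge_r]); auto).
  pose proof (chain_mem x) as CM. pose proof (prodf_pos (chf x) x) as PP.
  assert (PP' : chP x <> 0). { unfold chP. assert (0 < prodf (chf x) x); [apply PP; intro; unfold chf; lia|lia]. }
  clear PP. generalize (chK x) (chP x) CM PP'. clear CM PP'. intros Kk P CM PP.
  set (y := Fy x K) in *. set (z := cn x) in *. set (ZZ := pair x z) in *.
  assert (zZ : z <= ZZ) by apply pair_ge_r.
  assert (EZ : ZZ = pair x z) by reflexivity. assert (Ey : y = Fy x K) by reflexivity. assert (Ez : z = cn x) by reflexivity.
  assert (Ex : x = pair 3 (pair 2 (pair 26 K))) by reflexivity.
  clearbody y ZZ z. clearbody x.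
  exists (x + y + ZZ + Kk + P). split. lia.
  bd_unfold.
  split. lia.
  exists K; split. lia. exists z; split. lia. exists ZZ; split. lia. exists Kk; split. lia. exists P; split. lia.
  split.
  { pose proof (pair_ge_r 26 K). pose proof (pair_ge_r 2 (pair 26 K)).
    pose proof (pair_ge_r 3 (pair 2 (pair 26 K))).
    exists (pair 26 K); split. lia.
    exists (pair 2 (pair 26 K)); split. lia. repeat split; auto. }
  split.
  { pose proof (pair_ge_r 0 z). pose proof (pair_ge_r 1 (pair 0 z)). pose proof (pair_ge_l (pair 1 (pair 0 z)) K).
    pose proof (pair_ge_r 2 (pair (pair 1 (pair 0 z)) K)). pose proof (pair_ge_r 3 (pair 2 (pair (pair 1 (pair 0 z)) K))).
    assert (y = pair 3 (pair 2 (pair (pair 1 (pair 0 z)) K))) by (rewrite Ey, Ez; reflexivity).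
    exists (pair 0 z); split. lia.
    exists (pair 1 (pair 0 z)); split. lia.
    exists (pair (pair 1 (pair 0 z)) K); split. lia.
    exists (pair 2 (pair (pair 1 (pair 0 z)) K)); split. lia.
    repeat split; auto. }
  assert (HZ2 : 2 <= ZZ). { rewrite EZ, Ez. rewrite <- pair01. apply pair_mono. lia. rewrite <- cn_0. apply cn_mono'. lia. }
  assert (ZB : ZZ = pair x (cn x)) by (rewrite EZ, Ez; auto).
  split. auto. split. auto. split. auto.
  split. apply CM. lia. exists 0. split. lia. reflexivity.
  split. apply CM. lia. exists x. split; auto.
  intros i Hi u Hu v Hv E HIn Hne.
  apply CM in HIn; [|lia]. destruct HIn as [k [Hk Ek]].
  rewrite Ek in E. apply pair_inj in E as [<- <-].
  assert (k <> x) by (intro; subst; apply Hne; auto).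
  assert (Hle : pair (S k) (cn (S k)) <= ZZ) by (rewrite ZB; apply pair_mono; [lia|apply cn_mono'; lia]).
  exists (cn (S k)). split. pose proof (pair_ge_r (S k) (cn (S k))). lia.
  exists (pair (S k) (cn (S k))). split. auto. split. reflexivity. split. reflexivity.
  apply CM. lia. exists (S k). split; auto. lia.
Qed.

Fixpoint tboundb (k : nat) (t : term) : bool :=
  match t with
  | tvar n => n <? k
  | tzero => true
  | tsucc u => tboundb k u
  | tplus u v | tmult u v => tboundb k u && tboundb k v
  end.

Fixpoint dboundb (k : nat) (a : d0) : bool :=
  match a with
  | DEq t s | DLe t s => tboundb k t && tboundb k s
  | DNeg b => dboundb k b
  | DImp b c | DAnd b c => dboundb k b && dboundb k c
  | DAll t b | DEx t b => tboundb k t && dboundb (S k) b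
  end.

Lemma tboundb_sound t k : tboundb k t = true -> tbound k t.
Proof. induction t; simpl; rewrite ?andb_true_iff; try rewrite Nat.ltb_lt; intuition. Qed.

Lemma fle_bound k t s : tbound k t -> tbound k s -> fbound k (fle t s).
Proof.
  intros. unfold fle, fex, fneg. simpl. repeat split; try lia; apply tbound_shift; auto.
Qed.

Lemma dboundb_sound a : forall k, dboundb k a = true -> fbound k (tr a).
Proof.
  induction a; intro k; simpl; rewrite ?andb_true_iff; intros;
    repeat match goal with H : _ /\ _ |- _ => destruct H end; unfold fand, fneg; simpl;
    repeat split; auto using tboundb_sound, fle_bound.
  all: try (apply fle_bound; simpl; [lia|apply tbound_shift, tboundb_sound; auto]).
  all: try lia; repeat apply tbound_shift; apply tboundb_sound; auto.
Qed.

Lemma Body_bound : fbound 3 (tr Body).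
Proof. apply dboundb_sound. vm_compute. reflexivity. Qed.

Lemma Body_true K : let x := pair 3 (pair 2 (pair 26 K)) in
  exists W, evalp (env3 W (Fy x K) x) Body.
Proof.
  intro x. destruct (Bd_exists K) as [W [HW HB]]. exists W. split. exact HB.
  intros u Hu v Hv H. cbn [teval env3 scons] in *. simpl. apply evalp_subst in H.
  assert (H' : evalp (env3 v u x) Bd).
  { eapply evalp_ext; [|exact H]. intros [|[|n]]; reflexivity. }
  symmetry. exact (Bd_func _ _ _ _ _ HB H').
Qed.

Lemma leib_s0 T t s sg A : Prov T (fimp (feq t s) (fimp (fsubst (scons t sg) A) (fsubst (scons s sg) A))).
Proof.
  pose proof (leib_at T t s (scons tzero sg) 0 A) as H.
  rewrite (fsubst_ext A (upd _ 0 t) (scons t sg)), (fsubst_ext A (upd _ 0 s) (scons s sg)) in H. exact H.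
  all: intros [|n]; reflexivity.
Qed.

Lemma leib_s1 T t s a sg A : Prov T (fimp (feq t s) (fimp (fsubst (scons a (scons t sg)) A) (fsubst (scons a (scons s sg)) A))).
Proof.
  pose proof (leib_at T t s (scons a (scons tzero sg)) 1 A) as H.
  rewrite (fsubst_ext A (upd _ 1 t) (scons a (scons t sg))), (fsubst_ext A (upd _ 1 s) (scons a (scons s sg))) in H. exact H.
  all: intros [|[|n]]; reflexivity.
Qed.

Definition sx (x : nat) : nat -> term := scons (tvar 0) (scons (tvar 1) (fun _ => num x)).

Definition Bd_rest : d0 := match Bd with DAnd _ r => r | _ => Bd end.
Lemma Bd_split : Bd = DAnd (DLe (tvar 1) (tvar 0)) Bd_rest.
Proof. reflexivity. Qed.

Lemma nums_env3 k j x A : fsubst (scons (num k) (scons (num j) (fun _ => num x))) A = fsubst (nums (env3 k j x)) A.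
Proof. apply fsubst_ext. intros [|[|n]]; reflexivity. Qed.

Lemma d0_true T e a : RT T -> closedT T -> evalp e a -> Prov T (fsubst (nums e) (tr a)).
Proof. intros HR HT H. apply evalb_spec in H. apply (d0_complete T a HR HT e). auto. Qed.
Lemma d0_false T e a : RT T -> closedT T -> ~ evalp e a -> Prov T (fneg (fsubst (nums e) (tr a))).
Proof. intros HR HT H. apply (d0_complete T a HR HT e). destruct (evalb e a) eqn:E; auto.
  exfalso; apply H, evalb_spec, E. Qed.

Lemma tmp5 T a b c d e f : tautology (fimp a (fimp b (fimp c (fimp d (fimp e f))))) -> Prov T a -> Prov T b -> Prov T c -> Prov T d -> Prov T e -> Prov T f.
Proof. intros H1 H2 H3 H4 H5 H6. eapply P_mp; [|exact H6]. eapply tmp4; eauto. Qed.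

Lemma tsubst_scons_shift s u : tsubst (scons s tvar) (tshift u) = u.
Proof. unfold tshift. rewrite tsubst_comp. simpl. apply tsubst_id. Qed.

Lemma L_all_inst T sg t a s : Prov T (fimp (fsubst sg (tr (DAll t a))) (fimp (fle s (tsubst sg t)) (fsubst (scons s sg) (tr a)))).
Proof.
  rewrite fsubst_tr_all, tsubst_up_shift.
  pose proof (P_inst T (fimp (fle (tvar 0) (tshift (tsubst sg t))) (fsubst (up sg) (tr a))) s) as H.
  change (inst s (fimp ?P ?Q)) with (fimp (inst s P) (inst s Q)) in H.
  rewrite inst_up in H. unfold inst at 1 in H. rewrite fle_subst, tsubst_scons_shift in H. exact H.
Qed.

Section Uniq.
Variable T : theory.
Hypothesis HR : RT T.
Hypothesis HT : closedT T.
Variable x N W : nat.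
Hypothesis HB : evalp (env3 W N x) Body.

Let Bw := fsubst (sx x) (tr Bd).
Let G := feq (tvar 1) (num N).

Lemma caseA k : Prov T (fimp (feq (tvar 0) (num k)) (fimp Bw G)).
Proof.
  assert (H1 : Prov T (fimp Bw (fle (tvar 1) (tvar 0)))).
  { unfold Bw. rewrite Bd_split. cbn [tr]. unfold fand, fneg. cbn [fsubst]. rewrite fle_subst. simpl. taut. }
  pose proof (leib_s0 T (tvar 0) (num k) (scons (tvar 1) (fun _ => num x)) (fle (tvar 1) (tvar 0))) as H2.
  rewrite !fle_subst in H2. simpl in H2.
  pose proof (ax_le T (tvar 1) k HR) as H3.
  assert (H4 : Prov T (fimp (bigor_t (tvar 1) k) (fimp (feq (tvar 0) (num k)) (fimp Bw G)))).
  { apply bigor_elim. intros j Hj.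
    pose proof (leib_s0 T (tvar 0) (num k) (scons (tvar 1) (fun _ => num x)) (tr Bd)) as L1.
    pose proof (leib_s1 T (tvar 1) (num j) (num k) (fun _ => num x) (tr Bd)) as L2.
    rewrite nums_env3 in L2. fold Bw in L1.
    change (fsubst (scons (tvar 0) (scons (tvar 1) (fun _ => num x))) (tr Bd)) with Bw in L1.
    destruct (evalb (env3 k j x) Bd) eqn:E.
    - apply evalb_spec in E. assert (j = N).
      { apply (Bd_func k j x W N E). destruct HB; auto. }
      subst j. unfold G. taut.
    - assert (~ evalp (env3 k j x) Bd) by (intro H; apply evalb_spec in H; congruence).
      pose proof (d0_false T _ _ HR HT H) as L3.
      refine (tmp3 _ _ _ _ _ _ L1 L2 L3). tv. }
  refine (tmp4 _ _ _ _ _ _ _ H1 H2 H3 H4). tv.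
Qed.

Definition Mpart : d0 := DAll (tvar 0) (DAll (tvar 1) (DImp (dsubst sigB Bd) (DEq (tvar 1) (tvar 3)))).
Let Mw := fsubst (sx x) (tr Mpart).

Lemma caseAt n : Prov T (fimp (fle (tvar 0) (num n)) (fimp Bw G)).
Proof.
  pose proof (ax_le T (tvar 0) n HR) as H1.
  assert (H2 : Prov T (fimp (bigor_t (tvar 0) n) (fimp Bw G))).
  { apply bigor_elim. intros k _. apply caseA. }
  refine (tmp2 _ _ _ _ _ H1 H2). tv.
Qed.

Lemma unique_Bo : Prov T (fimp (fsubst (sx x) (tr Body)) G).
Proof.
  change (fsubst (sx x) (tr Body)) with (fand Bw Mw).
  pose proof (ax_tot T (tvar 0) W HR) as T1.
  pose proof (ax_tot T (tvar 0) N HR) as T2.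
  pose proof (caseAt W) as AW. pose proof (caseAt N) as AN.
  pose proof (L_all_inst T (sx x) (tvar 0) (DAll (tvar 1) (DImp (dsubst sigB Bd) (DEq (tvar 1) (tvar 3)))) (num N)) as M1.
  fold Mpart in M1. fold Mw in M1. simpl tsubst in M1.
  pose proof (L_all_inst T (scons (num N) (sx x)) (tvar 1) (DImp (dsubst sigB Bd) (DEq (tvar 1) (tvar 3))) (num W)) as M2.
  simpl tsubst in M2.
  change (fsubst ?s (tr (DImp ?A ?B))) with (fimp (fsubst s (tr A)) (fsubst s (tr B))) in M2.
  change (fsubst ?s (tr (DEq ?a ?b))) with (feq (tsubst s a) (tsubst s b)) in M2.
  cbn [tsubst scons sx] in M2.
  rewrite tr_dsubst, fsubst_comp in M2.
  rewrite (fsubst_ext (tr Bd) _ (nums (env3 W N x))) in M2 by (intros [|[|n]]; reflexivity).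
  assert (C : Prov T (fsubst (nums (env3 W N x)) (tr Bd))) by (apply d0_true; auto; destruct HB; auto).
  pose proof (eq_sym T (num N) (tvar 1)) as S1.
  assert (R1 : Prov T (fimp Mw (fimp (fle (num N) (tvar 0)) (fimp (fle (num W) (tvar 0)) G)))).
  { unfold G. refine (tmp4 _ _ _ _ _ _ _ M1 M2 C S1). tv. }
  refine (tmp5 _ _ _ _ _ _ _ _ T1 T2 AW AN R1). tv.
Qed.

End Uniq.

Lemma D_unique T x N W : RT T -> closedT T -> evalp (env3 W N x) Body ->
  Prov T (fimp (fex (fsubst (sx x) (tr Body))) (feq (tvar 0) (num N))).
Proof.
  intros HR HT HB. apply ex_elim; auto. unfold fshift. simpl. rewrite tsubst_num.
  apply (unique_Bo T HR HT x N W HB).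
Qed.

Lemma D_exists T x N W : RT T -> closedT T -> evalp (env3 W N x) Body ->
  Prov T (inst (num N) (fex (fsubst (sx x) (tr Body)))).
Proof.
  intros HR HT HB. unfold inst.
  change (fsubst ?s (fex ?P)) with (fex (fsubst (up s) P)).
  eapply P_mp. apply (fex_intro T _ (num W)).
  rewrite inst_up, fsubst_comp. rewrite (fsubst_ext (tr Body) _ (nums (env3 W N x))).
  apply d0_true; auto.
  intros [|[|n]]; simpl; auto. apply tsubst_num.
Qed.

Lemma inst_sentence p n : fbound 1 p -> sentence (inst (num n) p).
Proof. intro H. unfold sentence, inst. apply (fbound_subst p 1); auto. intros [|k] Hk; simpl. apply num_bound. lia. Qed.

Lemma inst_bound1_id p : fbound 1 p -> fsubst (scons (tvar 0) tvar) p = p.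
Proof. intro H. rewrite (fsubst_bound p 1 H _ tvar). apply fsubst_id; auto. intros [|n] Hn; [reflexivity|lia]. Qed.

Lemma up_bound1_id p s : fbound 1 p -> fsubst (up s) p = p.
Proof. intro H. rewrite (fsubst_bound p 1 H _ tvar). apply fsubst_id; auto. intros [|n] Hn; [reflexivity|lia]. Qed.

Lemma code_fall p : code (fall p) = pair 3 (code p). Proof. reflexivity. Qed.
Lemma code_fimp a b : code (fimp a b) = pair 2 (pair (code a) (code b)). Proof. reflexivity. Qed.
Lemma code_feq01 : code (feq (tvar 0) (tvar 1)) = 26. Proof. vm_compute. reflexivity. Qed.
Lemma code_feq0n m : code (feq (tvar 0) (num m)) = pair 1 (pair 0 (cn m)). Proof. reflexivity. Qed.

Lemma inst_th m Th : fbound 1 Th -> inst (num m) (fall (fimp (feq (tvar 0) (tvar 1)) Th)) = fall (fimp (feq (tvar 0) (num m)) Th).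
Proof.
  intro H. unfold inst.
  change (fsubst ?s (fall (fimp (feq ?a ?b) Th))) with (fall (fimp (feq (tsubst (up s) a) (tsubst (up s) b)) (fsubst (up s) Th))).
  rewrite up_bound1_id; auto. cbn [tsubst up scons]. rewrite tshift_num. reflexivity.
Qed.

Lemma diag_core T psi Th m K W : RT T -> closedT T -> fbound 1 psi -> fbound 1 Th ->
  Th = fex (fand (fex (tr Body)) psi) -> code Th = K -> evalp (env3 W (Fy m K) m) Body ->
  let d := fall (fimp (feq (tvar 0) (num m)) Th) in
  sentence d /\ Prov T (fimp d (apply_gn psi d)) /\ Prov T (fimp (apply_gn psi d) d).
Proof.
  intros HR HT Hpsi HTh ETh0 EK HB d.
  assert (EN : code d = Fy m K).
  { unfold d. rewrite code_fall, code_fimp, code_feq0n, EK. reflexivity. }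
  set (N := Fy m K) in *. clearbody N.
  set (Thm := inst (num m) Th).
  assert (ETh : Thm = fex (fand (fex (fsubst (sx m) (tr Body))) psi)).
  { unfold Thm. rewrite ETh0. unfold inst. change (fsubst ?s (fex ?P)) with (fex (fsubst (up s) P)).
    change (fsubst ?s (fand ?P ?Q)) with (fand (fsubst s P) (fsubst s Q)).
    change (fsubst ?s (fex ?P)) with (fex (fsubst (up s) P)).
    rewrite (up_bound1_id psi); auto. f_equal. f_equal. f_equal.
    apply (fsubst_bound _ 3 Body_bound). intros [|[|[|n]]] Hn; try reflexivity.
    cbn [up scons sx]. rewrite !tshift_num. reflexivity. lia. }
  assert (SThm : sentence Thm) by (apply inst_sentence; auto).
  assert (Sd : sentence d).
  { unfold d, sentence. cbn [fbound]. split; [split; [simpl; lia|apply num_bound]|]. auto. }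
  assert (Ed : inst (num m) (fimp (feq (tvar 0) (num m)) Th) = fimp (feq (num m) (num m)) Thm).
  { unfold Thm, inst. change (fsubst ?s (fimp (feq ?a ?b) Th)) with (fimp (feq (tsubst s a) (tsubst s b)) (fsubst s Th)).
    rewrite tsubst_num. reflexivity. }
  assert (Lm : fsubst (scons (num m) tvar) Th = Thm) by reflexivity.
  assert (L0 : fsubst (scons (tvar 0) tvar) Th = Th) by (apply inst_bound1_id; auto).
  clearbody Thm. clear ETh0.
  assert (SN : sentence (inst (num N) psi)) by (apply inst_sentence; auto).
  assert (A1 : Prov T (fimp Thm (inst (num N) psi))).
  { rewrite ETh. apply ex_elim; auto. rewrite sentence_shift; auto.
    pose proof (D_unique T m N W HR HT HB) as U.
    pose proof (leib_s0 T (tvar 0) (num N) tvar psi) as L. rewrite inst_bound1_id in L; auto.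
    fold (inst (num N) psi) in L.
    refine (tmp2 _ _ _ _ _ U L). tv. }
  assert (A2 : Prov T (fimp (inst (num N) psi) Thm)).
  { rewrite ETh. pose proof (fex_intro T (fand (fex (fsubst (sx m) (tr Body))) psi) (num N)) as F.
    change (inst (num N) (fand ?P ?Q)) with (fand (inst (num N) P) (inst (num N) Q)) in F.
    pose proof (D_exists T m N W HR HT HB) as E.
    refine (tmp2 _ _ _ _ _ F E). tv. }
  assert (A3 : Prov T (fimp d Thm)).
  { pose proof (P_inst T (fimp (feq (tvar 0) (num m)) Th) (num m)) as I. rewrite Ed in I.
    refine (tmp2 _ _ _ _ _ I (P_refl T (num m))). tv. }
  assert (A4 : Prov T (fimp Thm d)).
  { unfold d. eapply P_mp. apply P_allimp. apply gen; auto. rewrite sentence_shift; auto.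
    pose proof (leib_s0 T (num m) (tvar 0) tvar Th) as L. rewrite L0, Lm in L.
    refine (tmp2 _ _ _ _ _ L (eq_sym T (tvar 0) (num m))). tv. }
  split; auto. unfold apply_gn. rewrite EN. split.
  - refine (tmp2 _ _ _ _ _ A3 A1). tv.
  - refine (tmp2 _ _ _ _ _ A2 A4). tv.
Qed.

Lemma diagonal T psi : RT T -> closedT T -> fbound 1 psi ->
  exists d, sentence d /\ Prov T (fimp d (apply_gn psi d)) /\ Prov T (fimp (apply_gn psi d) d).
Proof.
  intros HR HT Hpsi.
  set (Th := fex (fand (fex (tr Body)) psi)).
  assert (HTh : fbound 1 Th).
  { assert (Hg : forall A, fbound 3 A -> fbound 1 (fex (fand (fex A) psi))).
    { intros A HA. unfold fex, fand, fneg. simpl. repeat split; auto. eapply fbound_mono; eauto. }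
    apply Hg, Body_bound. }
  assert (Ecode : code (fall (fimp (feq (tvar 0) (tvar 1)) Th)) = pair 3 (pair 2 (pair 26 (code Th)))).
  { rewrite code_fall, code_fimp, code_feq01. reflexivity. }
  destruct (Body_true (code Th)) as [W HB]. rewrite <- Ecode in HB.
  exists (inst (num (code (fall (fimp (feq (tvar 0) (tvar 1)) Th)))) (fall (fimp (feq (tvar 0) (tvar 1)) Th))).
  generalize dependent (code (fall (fimp (feq (tvar 0) (tvar 1)) Th))). intros m _ HB.
  rewrite inst_th; auto.
  exact (diag_core T psi Th m (code Th) W HR HT Hpsi HTh eq_refl eq_refl HB).
Qed.

Lemma refute T a : closedT T -> sentence a -> ~ Consistent (extend T a) -> Prov T (fneg a).
Proof. intros HT Ha H. apply NNPP in H. apply ded; auto. Qed.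

Theorem mainTheorem3 :
  forall U : theory,
    (forall p, U p -> sentence p) ->
    (forall p, R_axiom p -> Prov U p) ->
    Consistent U ->
    ~ (exists rho : form,
          fbound 1 rho /\
          (forall phi, sentence phi ->
             Consistent (extend U phi) ->
             Consistent (extend (extend U phi) (apply_gn rho phi)) /\
             Consistent (extend (extend U phi) (fneg (apply_gn rho phi)))) /\
          (forall phi psi, sentence phi -> sentence psi ->
             Prov U (fiff phi psi) ->
             Prov U (fiff (apply_gn rho phi) (apply_gn rho psi)))).
Proof.
  intros U HT HR HC [rho [Hb [Hind Hext]]].
  assert (HT' : closedT U) by exact HT.
  assert (Sb : sentence fbot) by exact I.
  assert (Sr : forall d, sentence (apply_gn rho d)) by (intro; apply inst_sentence; auto).
  destruct (diagonal U (fneg rho) HR HT' ltac:(simpl; split; auto)) as [d1 [S1 [F1 G1]]].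
  change (apply_gn (fneg rho) d1) with (fneg (apply_gn rho d1)) in F1, G1.
  assert (N1 : Prov U (fneg d1)).
  { apply refute; auto. intro C. destruct (Hind d1 S1 C) as [C1 _]. apply C1.
    pose proof (extend_lift _ (apply_gn rho d1) _ (extend_lift _ d1 _ F1)) as X1.
    pose proof (extend_lift _ (apply_gn rho d1) _ (extend_hyp U d1)) as X2.
    pose proof (extend_hyp (extend U d1) (apply_gn rho d1)) as X3.
    refine (tmp3 _ _ _ _ _ _ X1 X2 X3). tv. }
  assert (R1 : Prov U (apply_gn rho d1)) by (refine (tmp2 _ _ _ _ _ G1 N1); tv).
  assert (E1 : Prov U (fiff d1 fbot)) by (refine (tmp1 _ _ _ _ N1); tv).
  pose proof (Hext _ _ S1 Sb E1) as X1.
  assert (B1 : Prov U (apply_gn rho fbot)) by (refine (tmp2 _ _ _ _ _ X1 R1); tv).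
  destruct (diagonal U rho HR HT' Hb) as [d2 [S2 [F2 G2]]].
  assert (N2 : Prov U (fneg d2)).
  { apply refute; auto. intro C. destruct (Hind d2 S2 C) as [_ C2]. apply C2.
    pose proof (extend_lift _ (fneg (apply_gn rho d2)) _ (extend_lift _ d2 _ F2)) as Y1.
    pose proof (extend_lift _ (fneg (apply_gn rho d2)) _ (extend_hyp U d2)) as Y2.
    pose proof (extend_hyp (extend U d2) (fneg (apply_gn rho d2))) as Y3.
    refine (tmp3 _ _ _ _ _ _ Y1 Y2 Y3). tv. }
  assert (R2 : Prov U (fneg (apply_gn rho d2))) by (refine (tmp2 _ _ _ _ _ G2 N2); tv).
  assert (E2 : Prov U (fiff d2 fbot)) by (refine (tmp1 _ _ _ _ N2); tv).
  pose proof (Hext _ _ S2 Sb E2) as X2.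
  apply HC. refine (tmp3 _ _ _ _ _ _ X2 R2 B1). tv.
Qed.
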